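(* Let $\mathbf a,\mathbf b\in\mathbb Z^2$ be arbitrary integral vectors and put $B=|\mathbf a\times\mathbf b|$. Define the integers $$B_0=-B,\quad B_1=B+\|\mathbf a\|^2,\quad B_2=B+\|\mathbf b\|^2,\quad B_{3,4}=B+\|\mathbf a\pm\mathbf b\|^2=B+\|\mathbf a\|^2+\|\mathbf b\|^2\pm2\,\mathbf a\cdot\mathbf b .$$ Then $\mathbf a,\mathbf b$ determine an everted Descartes configuration of disks $D_0,D_1,D_2,D_3$ with curvatures $(B_0,B_1,B_2,B_3)$ (and likewise, the conjugate one with $B_4$ in place of $B_3$), in which $\mathbf a=\mathrm{spin}(D_0,D_1)$ and $\mathbf b=\mathrm{spin}(D_0,D_2)$; consequently the Apollonian packing generated by it is integral. Moreover, for every vector $\mathbf v=\alpha\mathbf a+\beta\mathbf b$ with $\alpha,\beta\in\mathbb Z$, $\gcd(\alpha,\beta)=1$, there is a disk in the major corona (the set of disks of the packing tangent to $D_0$) with curvature $$B_{\mathbf v}=B+\|\mathbf v\|^2 .$$ If $\mathbf v,\mathbf w$ are two such linear combinations with $\mathbf v\times\mathbf w=\pm B$, then the disks of curvatures $B_0,B_{\mathbf v},B_{\mathbf w}$ form a tricycle.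
   Context: A disk is the interior (inner, positive curvature $1/r$) or exterior (outer, negative curvature $-1/r$, signed radius $-r$) of a circle of radius $r$; half-planes have curvature $0$. A tricycle is a configuration of three mutually tangent, non-overlapping disks; a Descartes configuration is four mutually tangent non-overlapping disks; it is everted if it contains a disk of negative (or zero) curvature, that disk being the major disk. Every tricycle is completed uniquely to an Apollonian packing by recursively inscribing new disks in the curvilinear triangular gaps; it is integral if all curvatures are integers. Tangency spinor: identifying the plane with $\mathbb C$, for tangent disks $A,B$ with centers $c_A,c_B$ and signed radii $r_A,r_B$, $\mathrm{spin}(A,B)=\pm\sqrt{(c_B-c_A)/(r_Ar_B)}$, regarded as a vector in $\mathbb R^2$ (defined up to sign). For $\mathbf a=(x,y)^T,\mathbf b=(x',y')^T$: $\mathbf a\cdot\mathbf b=xx'+yy'$, $\mathbf a\times\mathbf b=xy'-x'y$, $\|\mathbf a\|^2=\mathbf a\cdot\mathbf a$. *)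

(* Defs.v *)
From Stdlib Require Import Reals ZArith.
From Coquelicot Require Import Coquelicot.

Open Scope R_scope.

Definition zdot (a b : Z * Z) : Z := (fst a * fst b + snd a * snd b)%Z.
Definition zcross (a b : Z * Z) : Z := (fst a * snd b - fst b * snd a)%Z.
Definition znorm2 (a : Z * Z) : Z := zdot a a.
Definition zadd (a b : Z * Z) : Z * Z := (fst a + fst b, snd a + snd b)%Z.
Definition zsub (a b : Z * Z) : Z * Z := (fst a - fst b, snd a - snd b)%Z.
Definition zlin (alpha beta : Z) (a b : Z * Z) : Z * Z :=
  (alpha * fst a + beta * fst b, alpha * snd a + beta * snd b)%Z.
Definition zvec (a : Z * Z) : C := (IZR (fst a), IZR (snd a)).

(* Inner c r : interior {z : |z - c| < r} of the circle of center c, radius r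
               (curvature 1/r, signed radius r);
   Outer c r : exterior {z : |z - c| > r} of that circle
               (curvature -1/r, signed radius -r);
   Half p n  : open half-plane {z : (z - p) . n > 0} (curvature 0). *)
Inductive disk : Type :=
| Inner (c : C) (r : R)
| Outer (c : C) (r : R)
| Half (p : C) (n : C).

Definition cdot (z w : C) : R := fst z * fst w + snd z * snd w.

Definition wf_disk (D : disk) : Prop :=
  match D with
  | Inner _ r => 0 < r
  | Outer _ r => 0 < r
  | Half _ n => n <> 0%C
  end.

Definition in_disk (D : disk) (z : C) : Prop :=
  match D with
  | Inner c r => Cmod (z - c) < r
  | Outer c r => r < Cmod (z - c)
  | Half p n => 0 < cdot (z - p) n
  end.

Definition on_boundary (D : disk) (z : C) : Prop :=
  match D with
  | Inner c r => Cmod (z - c) = r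
  | Outer c r => Cmod (z - c) = r
  | Half p n => cdot (z - p) n = 0
  end.

Definition curvature (D : disk) : R :=
  match D with
  | Inner _ r => / r
  | Outer _ r => - / r
  | Half _ _ => 0
  end.

Definition circ_data (D : disk) : option (C * R) :=
  match D with
  | Inner c r => Some (c, r)
  | Outer c r => Some (c, - r)
  | Half _ _ => None
  end.

Definition tangent (A B : disk) : Prop :=
  exists! z : C, on_boundary A z /\ on_boundary B z.

Definition non_overlapping (A B : disk) : Prop :=
  forall z : C, ~ (in_disk A z /\ in_disk B z).

Definition tangent_no (A B : disk) : Prop := tangent A B /\ non_overlapping A B.

Definition tricycle (A B D : disk) : Prop :=
  wf_disk A /\ wf_disk B /\ wf_disk D /\
  tangent_no A B /\ tangent_no A D /\ tangent_no B D.

Definition descartes (A B D E : disk) : Prop :=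
  tricycle A B D /\ wf_disk E /\
  tangent_no A E /\ tangent_no B E /\ tangent_no D E.

Definition everted (A B D E : disk) : Prop :=
  descartes A B D E /\
  (curvature A <= 0 \/ curvature B <= 0 \/ curvature D <= 0 \/ curvature E <= 0).

(* s is a tangency spinor spin(A,B): s^2 = (c_B - c_A)/(r_A r_B) in C
   (the spinor is defined up to sign, i.e. s is one of the two square roots) *)
Definition is_spin (A B : disk) (s : C) : Prop :=
  exists cA rA cB rB,
    circ_data A = Some (cA, rA) /\ circ_data B = Some (cB, rB) /\
    (s * s)%C = ((cB - cA) / RtoC (rA * rB))%C.

(* Tricycles obtained by recursively inscribing a disk in a curvilinear
   triangular gap: a disk E inscribed in the gap of the tricycle (A,B,D) is
   one completing it to a Descartes configuration; the new gaps are the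
   tricycles (A,B,E), (A,E,D), (E,B,D). *)
Inductive gen_tricycle (A0 B0 D0 : disk) : disk -> disk -> disk -> Prop :=
| gt_init : gen_tricycle A0 B0 D0 A0 B0 D0
| gt_step1 A B D E : gen_tricycle A0 B0 D0 A B D -> descartes A B D E ->
    gen_tricycle A0 B0 D0 A B E
| gt_step2 A B D E : gen_tricycle A0 B0 D0 A B D -> descartes A B D E ->
    gen_tricycle A0 B0 D0 A E D
| gt_step3 A B D E : gen_tricycle A0 B0 D0 A B D -> descartes A B D E ->
    gen_tricycle A0 B0 D0 E B D.

Definition in_packing (A0 B0 D0 : disk) (X : disk) : Prop :=
  exists A B D, gen_tricycle A0 B0 D0 A B D /\ (X = A \/ X = B \/ X = D).

Definition integral_packing (A0 B0 D0 : disk) : Prop :=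
  forall X, in_packing A0 B0 D0 X -> exists k : Z, curvature X = IZR k.

Definition in_major_corona (A0 B0 D0 : disk) (X : disk) : Prop :=
  in_packing A0 B0 D0 X /\ tangent A0 X.

(* Main.v *)
Require Import Defs.
From Stdlib Require Import Reals ZArith Lra Psatz.
From Coquelicot Require Import Coquelicot.
Open Scope R_scope.

Lemma sqrt_facts S : 0 <= S -> 0 <= sqrt S /\ sqrt S ^ 2 = S.
Proof. intros. split. apply sqrt_pos. apply pow2_sqrt. auto. Qed.

Definition nsq (z : C) := fst z ^ 2 + snd z ^ 2.
Lemma nsq_ge0 z : 0 <= nsq z. Proof. unfold nsq. nra. Qed.

Lemma Cmod_eq_iff z r : 0 <= r -> (Cmod z = r <-> nsq z = r ^ 2).
Proof. intros Hr. unfold Cmod. fold (nsq z). destruct (sqrt_facts _ (nsq_ge0 z)) as [H1 H2].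
 split; intros H. rewrite <- H; auto. nra. Qed.
Lemma Cmod_lt_iff z r : 0 <= r -> (Cmod z < r <-> nsq z < r ^ 2).
Proof. intros Hr. unfold Cmod. fold (nsq z). destruct (sqrt_facts _ (nsq_ge0 z)) as [H1 H2].
 split; intros H; nra. Qed.
Lemma Cmod_gt_iff z r : 0 <= r -> (r < Cmod z <-> r ^ 2 < nsq z).
Proof. intros Hr. unfold Cmod. fold (nsq z). destruct (sqrt_facts _ (nsq_ge0 z)) as [H1 H2].
 split; intros H; nra. Qed.

Lemma nsq_sub (z c : C) : nsq (z - c)%C = (fst z - fst c)^2 + (snd z - snd c)^2.
Proof. destruct z, c. unfold nsq. simpl. ring. Qed.

Lemma tangent_sym A B : tangent A B -> tangent B A.
Proof. intros [z [[H1 H2] H3]]. exists z. split; [auto|]. intros y [Y1 Y2]. apply H3; auto. Qed.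
Lemma nonov_sym A B : non_overlapping A B -> non_overlapping B A.
Proof. intros H z [H1 H2]. apply (H z); auto. Qed.
Lemma tangent_no_sym A B : tangent_no A B -> tangent_no B A.
Proof. intros [H1 H2]; split; [apply tangent_sym | apply nonov_sym]; auto. Qed.

Lemma sq_sum_zero a b : a^2 + b^2 = 0 -> a = 0 /\ b = 0.
Proof. intros H. assert (a^2 = 0) by nra. assert (b^2 = 0) by nra.
 split; [destruct (Req_dec a 0) as [?|Ha]; [auto|exfalso; apply (pow_nonzero a 2 Ha); auto]
        |destruct (Req_dec b 0) as [?|Hb]; [auto|exfalso; apply (pow_nonzero b 2 Hb); auto]]. Qed.

Lemma sq_lt a b : 0 <= a -> a < b -> a^2 < b^2.
Proof. intros. nra. Qed.

Lemma refl_lemma dx dy vx vy Q t : Q = dx^2 + dy^2 -> Q <> 0 -> t = (vx*dx + vy*dy)/Q ->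
  (2*t*dx - vx)^2 + (2*t*dy - vy)^2 = vx^2 + vy^2 /\
  (2*t*dx - vx - dx)^2 + (2*t*dy - vy - dy)^2 = (vx-dx)^2 + (vy-dy)^2.
Proof. intros HQ HQ0 Ht. subst t. split; field_simplify; auto; rewrite HQ; field; rewrite <- HQ; auto. Qed.

Lemma tang_CC (c1 c2 : C) (r1 r2 : R) : 0 < r1 -> 0 < r2 ->
  (exists! z : C, Cmod (z - c1) = r1 /\ Cmod (z - c2) = r2) ->
  let Q := (fst c2 - fst c1)^2 + (snd c2 - snd c1)^2 in
  Q = (r1 + r2)^2 \/ Q = (r1 - r2)^2.
Proof.
intros Hr1 Hr2 [z [[H1 H2] Hu]]. cbv zeta.
apply Cmod_eq_iff in H1; [|lra]. apply Cmod_eq_iff in H2; [|lra].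
rewrite nsq_sub in H1, H2.
destruct c1 as [x1 y1], c2 as [x2 y2], z as [zx zy]. cbn [fst snd] in *.
set (Q := (x2 - x1) ^ 2 + (y2 - y1) ^ 2).
destruct (Req_dec Q 0) as [HQ|HQ].
- unfold Q in HQ. apply sq_sum_zero in HQ. assert (x2 = x1) by lra. assert (y2 = y1) by lra. subst.
  right. unfold Q. assert (r1 ^ 2 = r2 ^ 2) by nra. nra.
- set (dx := x2 - x1). set (dy := y2 - y1). set (vx := zx - x1). set (vy := zy - y1).
  set (t := (vx * dx + vy * dy) / Q).
  assert (HQ' : Q = dx^2 + dy^2) by reflexivity.
  assert (Hz' : (x1 + (2*t*dx - vx), y1 + (2*t*dy - vy)) = (zx, zy)).
  { destruct (refl_lemma dx dy vx vy Q t HQ' HQ eq_refl) as [K1 K2].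
    symmetry. apply Hu. split.
    - apply Cmod_eq_iff; [lra|]. rewrite nsq_sub. cbn [fst snd].
      rewrite <- H1. replace (zx - x1) with vx by reflexivity. replace (zy - y1) with vy by reflexivity.
      rewrite <- K1. ring.
    - apply Cmod_eq_iff; [lra|]. rewrite nsq_sub. cbn [fst snd].
      rewrite <- H2.
      replace (zx - x2) with (vx - dx) by (unfold vx, dx; ring).
      replace (zy - y2) with (vy - dy) by (unfold vy, dy; ring).
      rewrite <- K2. unfold dx, dy. ring. }
  injection Hz' as E1 E2.
  assert (Ex : vx = t * dx) by (unfold vx in *; lra).
  assert (Ey : vy = t * dy) by (unfold vy in *; lra).
  assert (R1 : r1 ^ 2 = t^2 * Q) by (rewrite <- H1; fold vx vy; rewrite Ex, Ey, HQ'; ring).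
  assert (R2 : r2 ^ 2 = (t-1)^2 * Q).
  { rewrite <- H2. replace (zx - x2) with (vx - dx) by (unfold vx, dx; ring).
    replace (zy - y2) with (vy - dy) by (unfold vy, dy; ring). rewrite Ex, Ey, HQ'. ring. }
  assert (K : (Q - (r1+r2)^2) * (Q - (r1-r2)^2) = 0).
  { replace ((Q - (r1+r2)^2) * (Q - (r1-r2)^2)) with (Q*Q - 2*Q*(r1^2+r2^2) + (r1^2-r2^2)^2) by ring.
    rewrite R1, R2. ring. }
  apply Rmult_integral in K. destruct K; [left|right]; lra.
Qed.

Lemma cdot_sub (z p n : C) : cdot (z - p)%C n = (fst z - fst p) * fst n + (snd z - snd p) * snd n.
Proof. destruct z, p, n. unfold cdot. simpl. ring. Qed.

Lemma nz_nsq (n : C) : n <> RtoC 0 -> 0 < nsq n.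
Proof. intros H. destruct n as [nx ny]. unfold nsq. cbn [fst snd].
 destruct (Req_dec (nx^2+ny^2) 0) as [E|E]; [|nra].
 apply sq_sum_zero in E. destruct E; subst. exfalso; apply H; reflexivity. Qed.

Lemma tang_IH (c p n : C) (r : R) : 0 < r -> n <> RtoC 0 ->
  (exists! z : C, Cmod (z - c) = r /\ cdot (z - p) n = 0) ->
  (cdot (c - p) n) ^ 2 = r ^ 2 * nsq n.
Proof.
intros Hr Hn [z [[H1 H2] Hu]].
pose proof (nz_nsq n Hn) as HN.
apply Cmod_eq_iff in H1; [|lra]. rewrite nsq_sub in H1. rewrite cdot_sub in H2 |- *.
destruct c as [cx cy], p as [px py], n as [nx ny], z as [zx zy]. unfold nsq in HN |- *. cbn [fst snd] in *.
set (N := nx^2 + ny^2) in *.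
set (s := ((zx - cx)*(-ny) + (zy - cy)*nx)/N).
assert (Hz' : (zx - 2*s*(-ny), zy - 2*s*nx) = (zx, zy)).
{ symmetry. apply Hu. split.
  - apply Cmod_eq_iff; [lra|]. rewrite nsq_sub. cbn [fst snd]. rewrite <- H1.
    unfold s, N. field. fold N. lra.
  - rewrite cdot_sub. cbn [fst snd]. rewrite <- H2. ring. }
injection Hz' as E1 E2.
assert (Hs : s * N = 0).
{ assert (F1 : s * nx = 0) by lra. assert (F2 : s * ny = 0) by lra. unfold N.
  replace (s * (nx^2+ny^2)) with ((s*nx)*nx + (s*ny)*ny) by ring. rewrite F1, F2. ring. }
assert (Hw : (zx - cx)*(-ny) + (zy - cy)*nx = 0).
{ assert (E : (zx - cx)*(-ny) + (zy - cy)*nx = s * N) by (unfold s; field; lra). lra. }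
assert (L : N * ((zx - cx)^2 + (zy - cy)^2) = ((zx-cx)*nx + (zy-cy)*ny)^2 + ((zx - cx)*(-ny) + (zy - cy)*nx)^2)
  by (unfold N; ring).
rewrite Hw, H1 in L.
replace ((cx - px) * nx + (cy - py) * ny) with (- ((zx-cx)*nx + (zy-cy)*ny)) by lra.
lra.
Qed.

Lemma tn_II c1 c2 r1 r2 : 0 < r1 -> 0 < r2 -> tangent_no (Inner c1 r1) (Inner c2 r2) ->
  (fst c2 - fst c1)^2 + (snd c2 - snd c1)^2 = (r1 + r2)^2.
Proof.
intros H1 H2 [Ht Hn]. unfold tangent in Ht. cbn [on_boundary] in Ht.
destruct (tang_CC c1 c2 r1 r2 H1 H2 Ht) as [E|E]; auto.
exfalso. destruct (Rle_dec r1 r2).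
- apply (Hn c1). cbn [in_disk]. split.
  + apply Cmod_lt_iff; [lra|]. rewrite nsq_sub. nra.
  + apply Cmod_lt_iff; [lra|]. rewrite nsq_sub. nra.
- apply (Hn c2). cbn [in_disk]. split.
  + apply Cmod_lt_iff; [lra|]. rewrite nsq_sub. nra.
  + apply Cmod_lt_iff; [lra|]. rewrite nsq_sub. nra.
Qed.

Lemma tn_IO c1 c2 r1 r2 : 0 < r1 -> 0 < r2 -> tangent_no (Inner c1 r1) (Outer c2 r2) ->
  (fst c2 - fst c1)^2 + (snd c2 - snd c1)^2 = (r1 - r2)^2.
Proof.
intros H1 H2 [Ht Hn]. unfold tangent in Ht. cbn [on_boundary] in Ht.
destruct (tang_CC c1 c2 r1 r2 H1 H2 Ht) as [E|E]; auto.
exfalso. apply (Hn c1). cbn [in_disk]. split.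
  + apply Cmod_lt_iff; [lra|]. rewrite nsq_sub. nra.
  + apply Cmod_gt_iff; [lra|]. rewrite nsq_sub. nra.
Qed.

Lemma tn_OO c1 c2 r1 r2 : 0 < r1 -> 0 < r2 -> tangent_no (Outer c1 r1) (Outer c2 r2) -> False.
Proof.
intros H1 H2 [Ht Hn].
set (K := r1 + r2 + Rabs (fst c2 - fst c1) + 1).
apply (Hn (fst c1 + K, snd c1)). cbn [in_disk].
pose proof (Rle_abs (fst c2 - fst c1)). pose proof (Rabs_pos (fst c2 - fst c1)).
split.
+ apply Cmod_gt_iff; [lra|]. rewrite nsq_sub. cbn [fst snd].
  replace (fst c1 + K - fst c1) with K by ring. replace (snd c1 - snd c1) with 0 by ring.
  assert (r1 < K) by (unfold K; lra). nra.
+ apply Cmod_gt_iff; [lra|]. rewrite nsq_sub. cbn [fst snd].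
  assert (r2 < fst c1 + K - fst c2) by (unfold K; lra).
  assert (r2^2 < (fst c1 + K - fst c2)^2) by nra. pose proof (pow2_ge_0 (snd c1 - snd c2)). lra.
Qed.

Lemma tn_OH c p n r : 0 < r -> n <> RtoC 0 -> tangent_no (Outer c r) (Half p n) -> False.
Proof.
intros H1 H2 [Ht Hn]. pose proof (nz_nsq n H2) as HN.
set (h := cdot (c - p) n).
set (S := Rabs (fst n) + Rabs (snd n)).
set (K := (1 + Rabs h + r * S) / nsq n).
apply (Hn (fst c + K * fst n, snd c + K * snd n)). cbn [in_disk].
pose proof (Rabs_pos h). pose proof (Rle_abs h). pose proof (Rle_abs (-h)).
rewrite Rabs_Ropp in *.
assert (HS : nsq n <= S^2).
{ unfold S, nsq. pose proof (Rabs_pos (fst n)). pose proof (Rabs_pos (snd n)).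
  pose proof (Rsqr_abs (fst n)). pose proof (Rsqr_abs (snd n)). unfold Rsqr in *. nra. }
assert (HS0 : 0 <= S) by (unfold S; pose proof (Rabs_pos (fst n)); pose proof (Rabs_pos (snd n)); lra).
assert (HK : K * nsq n = 1 + Rabs h + r * S) by (unfold K; field; lra).
split.
+ apply Cmod_gt_iff; [lra|]. rewrite nsq_sub. cbn [fst snd].
  replace ((fst c + K * fst n - fst c) ^ 2 + (snd c + K * snd n - snd c) ^ 2) with (K^2 * nsq n) by (unfold nsq; ring).
  assert (A1 : r * S < K * nsq n) by (rewrite HK; pose proof (Rabs_pos h); lra).
  assert (A2 : (r*S)^2 < (K * nsq n)^2) by (apply sq_lt; [nra|auto]).
  assert (A3 : r^2 * nsq n <= (r*S)^2).
  { replace ((r*S)^2) with (r^2 * S^2) by ring. apply Rmult_le_compat_l; [nra|auto]. }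
  assert (A4 : K^2 * nsq n * nsq n = (K * nsq n)^2) by ring.
  apply (Rmult_lt_reg_r (nsq n)); auto. lra.
+ rewrite cdot_sub. cbn [fst snd].
  replace ((fst c + K * fst n - fst p) * fst n + (snd c + K * snd n - snd p) * snd n) with (h + K * nsq n)
   by (unfold h; rewrite cdot_sub; unfold nsq; ring).
  nra.
Qed.

Lemma tn_HH p1 n1 p2 n2 : n1 <> RtoC 0 -> n2 <> RtoC 0 -> tangent_no (Half p1 n1) (Half p2 n2) -> False.
Proof.
intros H1 H2 [Ht Hn]. pose proof (nz_nsq n1 H1) as HN1.
destruct Ht as [z [[E1 E2] Hu]]. cbn [on_boundary] in *.
destruct p1 as [a1 b1], n1 as [u1 v1], p2 as [a2 b2], n2 as [u2 v2].
unfold nsq in HN1. cbn [fst snd] in *.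
set (X := u1 * v2 - v1 * u2).
destruct (Req_dec X 0) as [HX|HX].
- (* parallel: another common point *)
  assert (Hz : (fst z - v1, snd z + u1) = z).
  { symmetry. apply Hu. cbn [on_boundary]. rewrite !cdot_sub in *. cbn [fst snd] in *. split.
    - rewrite <- E1. ring.
    - rewrite <- E2. unfold X in HX. lra. }
  destruct z as [zx zy]. injection Hz as F1 F2. nra.
- apply (Hn ((((1 + a1*u1 + b1*v1) * v2 - (1 + a2*u2 + b2*v2) * v1) / X),
             ((u1 * (1 + a2*u2 + b2*v2) - u2 * (1 + a1*u1 + b1*v1)) / X))).
  cbn [in_disk]. rewrite !cdot_sub. cbn [fst snd]. split.
  + replace ((((1 + a1 * u1 + b1 * v1) * v2 - (1 + a2 * u2 + b2 * v2) * v1) / X - a1) * u1 +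
    ((u1 * (1 + a2 * u2 + b2 * v2) - u2 * (1 + a1 * u1 + b1 * v1)) / X - b1) * v1) with 1
    by (unfold X in *; field; auto). lra.
  + replace ((((1 + a1 * u1 + b1 * v1) * v2 - (1 + a2 * u2 + b2 * v2) * v1) / X - a2) * u2 +
    ((u1 * (1 + a2 * u2 + b2 * v2) - u2 * (1 + a1 * u1 + b1 * v1)) / X - b2) * v2) with 1
    by (unfold X in *; field; auto). lra.
Qed.

Lemma tn_IH c p n r : 0 < r -> n <> RtoC 0 -> tangent_no (Inner c r) (Half p n) ->
  (cdot (c - p) n) ^ 2 = r ^ 2 * nsq n /\ cdot (c - p) n <= 0.
Proof.
intros H1 H2 [Ht Hn]. split.
- apply tang_IH; auto.
- destruct (Rle_dec (cdot (c - p) n) 0) as [|Hc]; auto. exfalso.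
  apply (Hn c). cbn [in_disk]. split; [|lra].
  apply Cmod_lt_iff; [lra|]. rewrite nsq_sub. nra.
Qed.

Definition gram (d12 d13 d14 d23 d24 d34 : R) : R :=
  let g11 := d14 in let g22 := d24 in let g33 := d34 in
  let g12 := (d14 + d24 - d12)/2 in let g13 := (d14 + d34 - d13)/2 in
  let g23 := (d24 + d34 - d23)/2 in
  g11 * (g22 * g33 - g23 * g23) - g12 * (g12 * g33 - g23 * g13) + g13 * (g12 * g23 - g22 * g13).

Lemma gram_zero x1 y1 x2 y2 x3 y3 x4 y4 :
  gram ((x2-x1)^2+(y2-y1)^2) ((x3-x1)^2+(y3-y1)^2) ((x4-x1)^2+(y4-y1)^2)
       ((x3-x2)^2+(y3-y2)^2) ((x4-x2)^2+(y4-y2)^2) ((x4-x3)^2+(y4-y3)^2) = 0.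
Proof. unfold gram. cbv zeta. field. Qed.

Lemma gram_rho r1 r2 r3 r4 : r1 <> 0 -> r2 <> 0 -> r3 <> 0 -> r4 <> 0 ->
  gram ((r1+r2)^2) ((r1+r3)^2) ((r1+r4)^2) ((r2+r3)^2) ((r2+r4)^2) ((r3+r4)^2)
  = 4 * (r1*r2*r3*r4)^2 * ((/r1 + /r2 + /r3 + /r4)^2 - 2 * ((/r1)^2 + (/r2)^2 + (/r3)^2 + (/r4)^2)).
Proof. intros. unfold gram. cbv zeta. field. auto. Qed.

Lemma desc_circ x1 y1 x2 y2 x3 y3 x4 y4 r1 r2 r3 r4 :
  r1 <> 0 -> r2 <> 0 -> r3 <> 0 -> r4 <> 0 ->
  (x2-x1)^2+(y2-y1)^2 = (r1+r2)^2 -> (x3-x1)^2+(y3-y1)^2 = (r1+r3)^2 ->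
  (x4-x1)^2+(y4-y1)^2 = (r1+r4)^2 -> (x3-x2)^2+(y3-y2)^2 = (r2+r3)^2 ->
  (x4-x2)^2+(y4-y2)^2 = (r2+r4)^2 -> (x4-x3)^2+(y4-y3)^2 = (r3+r4)^2 ->
  (/r1 + /r2 + /r3 + /r4)^2 = 2 * ((/r1)^2 + (/r2)^2 + (/r3)^2 + (/r4)^2).
Proof.
intros H1 H2 H3 H4 E12 E13 E14 E23 E24 E34.
pose proof (gram_zero x1 y1 x2 y2 x3 y3 x4 y4) as G.
rewrite E12, E13, E14, E23, E24, E34, gram_rho in G by auto.
assert (P : (r1*r2*r3*r4)^2 <> 0) by (apply pow_nonzero; repeat apply Rmult_integral_contrapositive_currified; auto).
apply Rmult_integral in G. destruct G as [G|G].
- exfalso. apply P. lra.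
- lra.
Qed.

Lemma hh_lem hi hj ri rj N : 0 < ri -> 0 < rj -> 0 < N -> hi^2 = ri^2 * N -> hj^2 = rj^2*N -> hi <= 0 -> hj <= 0 ->
  hi * hj = ri * rj * N.
Proof.
intros. assert (E : (hi*hj)^2 = (ri*rj*N)^2) by (replace ((hi*hj)^2) with (hi^2*hj^2) by ring;
  rewrite H2, H3; ring).
assert (0 <= hi*hj) by nra. assert (0 <= ri*rj*N) by (apply Rmult_le_pos; [nra|lra]).
assert (F: (hi*hj - ri*rj*N) * (hi*hj + ri*rj*N) = 0) by (replace ((hi*hj - ri*rj*N) * (hi*hj + ri*rj*N)) with ((hi*hj)^2 - (ri*rj*N)^2) by ring; lra).
apply Rmult_integral in F. destruct F; nra.
Qed.

Lemma uu_lem xi yi xj yj ri rj nx ny px py :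
  let N := nx^2 + ny^2 in
  let hi := (xi - px)*nx + (yi - py)*ny in let hj := (xj - px)*nx + (yj - py)*ny in
  (xj-xi)^2 + (yj-yi)^2 = (ri+rj)^2 -> hi^2 = ri^2*N -> hj^2 = rj^2*N -> hi*hj = ri*rj*N ->
  ((xi*(-ny) + yi*nx) - (xj*(-ny) + yj*nx))^2 = 4 * N * ri * rj.
Proof.
intros N hi hj D Hi Hj Hij.
assert (L : N * ((xj-xi)^2 + (yj-yi)^2) = (hi - hj)^2 + ((xi*(-ny) + yi*nx) - (xj*(-ny) + yj*nx))^2)
  by (unfold N, hi, hj; ring).
rewrite D in L.
replace ((hi - hj)^2) with (hi^2 + hj^2 - 2*(hi*hj)) in L by ring.
rewrite Hi, Hj, Hij in L. lra.
Qed.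

Lemma desc_line x1 y1 x2 y2 x3 y3 r1 r2 r3 nx ny px py :
  0 < r1 -> 0 < r2 -> 0 < r3 -> 0 < nx^2 + ny^2 ->
  (x2-x1)^2+(y2-y1)^2 = (r1+r2)^2 -> (x3-x1)^2+(y3-y1)^2 = (r1+r3)^2 ->
  (x3-x2)^2+(y3-y2)^2 = (r2+r3)^2 ->
  ((x1 - px)*nx + (y1 - py)*ny)^2 = r1^2 * (nx^2+ny^2) -> (x1 - px)*nx + (y1 - py)*ny <= 0 ->
  ((x2 - px)*nx + (y2 - py)*ny)^2 = r2^2 * (nx^2+ny^2) -> (x2 - px)*nx + (y2 - py)*ny <= 0 ->
  ((x3 - px)*nx + (y3 - py)*ny)^2 = r3^2 * (nx^2+ny^2) -> (x3 - px)*nx + (y3 - py)*ny <= 0 ->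
  (/r1 + /r2 + /r3 + 0)^2 = 2 * ((/r1)^2 + (/r2)^2 + (/r3)^2 + 0^2).
Proof.
intros P1 P2 P3 PN E12 E13 E23 F1 G1 F2 G2 F3 G3.
pose proof (hh_lem _ _ _ _ _ P1 P2 PN F1 F2 G1 G2) as H12.
pose proof (hh_lem _ _ _ _ _ P1 P3 PN F1 F3 G1 G3) as H13.
pose proof (hh_lem _ _ _ _ _ P2 P3 PN F2 F3 G2 G3) as H23.
pose proof (uu_lem x1 y1 x2 y2 r1 r2 nx ny px py E12 F1 F2 H12) as U12.
pose proof (uu_lem x1 y1 x3 y3 r1 r3 nx ny px py E13 F1 F3 H13) as U13.
pose proof (uu_lem x2 y2 x3 y3 r2 r3 nx ny px py E23 F2 F3 H23) as U23.
cbv zeta in U12, U13, U23.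
set (N := nx^2+ny^2) in *.
set (A := (x1 * - ny + y1 * nx) - (x2 * - ny + y2 * nx)) in *.
set (Bq := (x2 * - ny + y2 * nx) - (x3 * - ny + y3 * nx)) in *.
assert (HAB : (A + Bq)^2 = 4 * N * r1 * r3) by (rewrite <- U13; unfold A, Bq; ring).
assert (H2AB : 2 * A * Bq = 4 * N * (r1*r3 - r1*r2 - r2*r3)).
{ replace (2*A*Bq) with ((A+Bq)^2 - A^2 - Bq^2) by ring. rewrite HAB, U12, U23. ring. }
assert (K : 16 * N^2 * ((r1*r3 - r1*r2 - r2*r3)^2 - 4*r1*r2^2*r3) = 0).
{ replace (16 * N^2 * ((r1*r3 - r1*r2 - r2*r3)^2 - 4*r1*r2^2*r3)) with
   ((2*A*Bq)^2 - 4 * A^2 * Bq^2) by (rewrite H2AB; rewrite U12, U23; ring). ring. }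
assert (K2 : (r1*r3 - r1*r2 - r2*r3)^2 - 4*r1*r2^2*r3 = 0).
{ apply Rmult_integral in K. destruct K as [K|K]; auto. exfalso. assert (0 < 16 * N^2) by nra. lra. }
assert (Z : (/r1 + /r2 + /r3 + 0)^2 - 2 * ((/r1)^2 + (/r2)^2 + (/r3)^2 + 0^2)
   = - ((r1*r3 - r1*r2 - r2*r3)^2 - 4*r1*r2^2*r3) / (r1*r2*r3)^2) by (field; lra).
rewrite K2 in Z. lra.
Qed.

Definition R4 a b c d := (a+b+c+d)^2 = 2*(a^2+b^2+c^2+d^2).
Lemma R4_perm a b c d : R4 a b c d -> R4 b c d a /\ R4 a b d c /\ R4 b a c d.
Proof. unfold R4. intros. repeat split; lra. Qed.

Definition Pdisk X Y := wf_disk X /\ wf_disk Y /\ tangent_no X Y.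
Lemma Pdisk_sym X Y : Pdisk X Y -> Pdisk Y X.
Proof. intros [? [? ?]]. repeat split; auto; apply tangent_no_sym; auto. Qed.

Lemma circ_pair X Y cX rX cY rY : Pdisk X Y -> circ_data X = Some (cX, rX) -> circ_data Y = Some (cY, rY) ->
  (fst cY - fst cX)^2 + (snd cY - snd cX)^2 = (rX + rY)^2.
Proof.
intros [WX [WY T]] HX HY.
destruct X as [c1 r1|c1 r1|p1 n1]; destruct Y as [c2 r2|c2 r2|p2 n2]; cbn in HX, HY, WX, WY;
 try discriminate; injection HX as <- <-; injection HY as <- <-.
- apply tn_II; auto.
- rewrite (tn_IO c1 c2 r1 r2 WX WY T). ring.
- apply tangent_no_sym in T. pose proof (tn_IO c2 c1 r2 r1 WY WX T) as E.
  replace ((fst c2 - fst c1)^2 + (snd c2 - snd c1)^2) with ((fst c1 - fst c2)^2 + (snd c1 - snd c2)^2) by ring.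
  rewrite E. ring.
- exfalso. apply (tn_OO c1 c2 r1 r2 WX WY T).
Qed.

Lemma curv_circ X c r : circ_data X = Some (c, r) -> wf_disk X -> curvature X = / r /\ r <> 0.
Proof.
intros H W. destruct X as [c1 r1|c1 r1|p1 n1]; cbn in H, W |- *; try discriminate;
 injection H as <- <-; split; try lra. field. lra.
Qed.

Lemma half_pair X p n : Pdisk X (Half p n) ->
  exists c r, X = Inner c r /\ 0 < r /\ (cdot (c - p) n) ^ 2 = r ^ 2 * nsq n /\ cdot (c - p) n <= 0.
Proof.
intros [WX [WY T]]. cbn in WY.
destruct X as [c1 r1|c1 r1|p1 n1]; cbn in WX.
- exists c1, r1. split; auto. split; auto. apply tn_IH; auto.
- exfalso. apply (tn_OH c1 p n r1); auto.
- exfalso. apply (tn_HH p1 n1 p n); auto.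
Qed.

Lemma rel4_half A B D p n : Pdisk A B -> Pdisk A D -> Pdisk B D ->
  Pdisk A (Half p n) -> Pdisk B (Half p n) -> Pdisk D (Half p n) ->
  R4 (curvature A) (curvature B) (curvature D) (curvature (Half p n)).
Proof.
intros PAB PAD PBD PA PB PD.
destruct (half_pair _ _ _ PA) as [c1 [r1 [-> [Q1 [F1 G1]]]]].
destruct (half_pair _ _ _ PB) as [c2 [r2 [-> [Q2 [F2 G2]]]]].
destruct (half_pair _ _ _ PD) as [c3 [r3 [-> [Q3 [F3 G3]]]]].
pose proof (circ_pair _ _ c1 r1 c2 r2 PAB eq_refl eq_refl) as E12.
pose proof (circ_pair _ _ c1 r1 c3 r3 PAD eq_refl eq_refl) as E13.
pose proof (circ_pair _ _ c2 r2 c3 r3 PBD eq_refl eq_refl) as E23.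
destruct PA as [_ [WH _]]. cbn in WH. pose proof (nz_nsq n WH) as HN.
rewrite !cdot_sub in *. unfold nsq in *. cbn [curvature]. unfold R4.
destruct p as [px py], n as [nx ny]. cbn [fst snd] in *.
eapply desc_line; eauto.
Qed.

Lemma rel4_circ A B D E cA rA cB rB cD rD cE rE :
  Pdisk A B -> Pdisk A D -> Pdisk A E -> Pdisk B D -> Pdisk B E -> Pdisk D E ->
  circ_data A = Some (cA, rA) -> circ_data B = Some (cB, rB) ->
  circ_data D = Some (cD, rD) -> circ_data E = Some (cE, rE) ->
  R4 (curvature A) (curvature B) (curvature D) (curvature E).
Proof.
intros PAB PAD PAE PBD PBE PDE HA HB HD HE.
pose proof (circ_pair _ _ _ _ _ _ PAB HA HB).
pose proof (circ_pair _ _ _ _ _ _ PAD HA HD).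
pose proof (circ_pair _ _ _ _ _ _ PAE HA HE).
pose proof (circ_pair _ _ _ _ _ _ PBD HB HD).
pose proof (circ_pair _ _ _ _ _ _ PBE HB HE).
pose proof (circ_pair _ _ _ _ _ _ PDE HD HE).
destruct (curv_circ _ _ _ HA (proj1 PAB)) as [-> NA].
destruct (curv_circ _ _ _ HB (proj1 (proj2 PAB))) as [-> NB].
destruct (curv_circ _ _ _ HD (proj1 (proj2 PAD))) as [-> ND].
destruct (curv_circ _ _ _ HE (proj1 (proj2 PAE))) as [-> NE].
unfold R4. eapply desc_circ; eauto.
Qed.

Lemma kind X : (exists p n, X = Half p n) \/ (exists c r, circ_data X = Some (c, r)).
Proof. destruct X as [c r|c r|p n]; [right|right|left]; cbn; eauto. Qed.

Lemma rel4 A B D E : descartes A B D E ->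
  R4 (curvature A) (curvature B) (curvature D) (curvature E).
Proof.
intros [[WA [WB [WD [TAB [TAD TBD]]]]] [WE [TAE [TBE TDE]]]].
assert (PAB : Pdisk A B) by (split; [|split]; auto).
assert (PAD : Pdisk A D) by (split; [|split]; auto).
assert (PBD : Pdisk B D) by (split; [|split]; auto).
assert (PAE : Pdisk A E) by (split; [|split]; auto).
assert (PBE : Pdisk B E) by (split; [|split]; auto).
assert (PDE : Pdisk D E) by (split; [|split]; auto).
pose proof (Pdisk_sym _ _ PAB). pose proof (Pdisk_sym _ _ PAD). pose proof (Pdisk_sym _ _ PBD).
pose proof (Pdisk_sym _ _ PAE). pose proof (Pdisk_sym _ _ PBE). pose proof (Pdisk_sym _ _ PDE).
destruct (kind E) as [[p [n ->]]|[cE [rE HE]]].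
{ apply rel4_half; auto. }
destruct (kind D) as [[p [n ->]]|[cD [rD HD]]].
{ pose proof (rel4_half A B E p n) as K.
  assert (K' : R4 (curvature A) (curvature B) (curvature E) (curvature (Half p n))) by (apply K; auto).
  unfold R4 in *; lra. }
destruct (kind B) as [[p [n ->]]|[cB [rB HB]]].
{ pose proof (rel4_half A D E p n) as K.
  assert (K' : R4 (curvature A) (curvature D) (curvature E) (curvature (Half p n))) by (apply K; auto).
  unfold R4 in *; lra. }
destruct (kind A) as [[p [n ->]]|[cA [rA HA]]].
{ pose proof (rel4_half B D E p n) as K.
  assert (K' : R4 (curvature B) (curvature D) (curvature E) (curvature (Half p n))) by (apply K; auto).
  unfold R4 in *; lra. }
eapply rel4_circ; eauto.
Qed.

Definition Inv (X Y W : disk) : Prop :=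
  exists ka kb kd s : Z, curvature X = IZR ka /\ curvature Y = IZR kb /\ curvature W = IZR kd /\
    (s * s = ka * kb + kb * kd + kd * ka)%Z.

Lemma inv_step_curv A B D E : Inv A B D -> descartes A B D E ->
  exists ka kb kd s : Z, curvature A = IZR ka /\ curvature B = IZR kb /\ curvature D = IZR kd /\
    (s * s = ka * kb + kb * kd + kd * ka)%Z /\
    (curvature E = IZR (ka + kb + kd + 2 * s) \/ curvature E = IZR (ka + kb + kd - 2 * s)).
Proof.
intros [ka [kb [kd [s [HA [HB [HD HS]]]]]]] HDe.
pose proof (rel4 _ _ _ _ HDe) as R. rewrite HA, HB, HD in R. unfold R4 in R.
exists ka, kb, kd, s. repeat split; auto.
assert (HS' : IZR s * IZR s = IZR ka * IZR kb + IZR kb * IZR kd + IZR kd * IZR ka).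
{ rewrite <- !mult_IZR, <- !plus_IZR. f_equal. auto. }
set (e := curvature E) in *.
assert (K : (e - (IZR ka + IZR kb + IZR kd) - 2 * IZR s) * (e - (IZR ka + IZR kb + IZR kd) + 2 * IZR s) = 0).
{ lra. }
repeat rewrite ?minus_IZR, ?plus_IZR, ?mult_IZR.
apply Rmult_integral in K. destruct K; [left|right]; lra.
Qed.

Lemma inv_step A B D E : Inv A B D -> descartes A B D E -> Inv A B E /\ Inv A E D /\ Inv E B D.
Proof.
intros HI HDe. destruct (inv_step_curv _ _ _ _ HI HDe) as [ka [kb [kd [s [HA [HB [HD [HS [HE|HE]]]]]]]]]. 
- split; [|split].
  + exists ka, kb, (ka+kb+kd+2*s)%Z, (ka + kb + s)%Z. repeat split; auto. nia.
  + exists ka, (ka+kb+kd+2*s)%Z, kd, (ka + kd + s)%Z. repeat split; auto. nia.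
  + exists (ka+kb+kd+2*s)%Z, kb, kd, (kb + kd + s)%Z. repeat split; auto. nia.
- split; [|split].
  + exists ka, kb, (ka+kb+kd-2*s)%Z, (ka + kb - s)%Z. repeat split; auto. nia.
  + exists ka, (ka+kb+kd-2*s)%Z, kd, (ka + kd - s)%Z. repeat split; auto. nia.
  + exists (ka+kb+kd-2*s)%Z, kb, kd, (kb + kd - s)%Z. repeat split; auto. nia.
Qed.

Lemma inv_gen A0 B0 D0 A B D : Inv A0 B0 D0 -> gen_tricycle A0 B0 D0 A B D -> Inv A B D.
Proof.
intros H0 G. induction G.
- auto.
- apply (inv_step A B D E); auto.
- apply (inv_step A B D E); auto.
- apply (inv_step A B D E); auto.
Qed.

Lemma inv_integral A0 B0 D0 : Inv A0 B0 D0 -> integral_packing A0 B0 D0.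
Proof.
intros H0 X HP. destruct HP as [A [B [D [G HX]]]].
destruct (inv_gen _ _ _ _ _ _ H0 G) as [ka [kb [kd [s [HA [HB [HD HS]]]]]]].
destruct HX as [HX|[HX|HX]]; rewrite HX; eauto.
Qed.

Lemma uniq_pt ux uy dx dy a S : ux^2 + uy^2 = a^2 -> dx^2 + dy^2 = S^2 -> ux*dx + uy*dy = a*S -> S <> 0 ->
  ux = a / S * dx /\ uy = a / S * dy.
Proof.
intros H1 H2 H3 HS.
assert (E : (S*ux - a*dx)^2 + (S*uy - a*dy)^2 = 0).
{ replace ((S*ux - a*dx)^2 + (S*uy - a*dy)^2) with
    (S^2 * (ux^2+uy^2) - 2*S*a*(ux*dx+uy*dy) + a^2*(dx^2+dy^2)) by ring.
  rewrite H1, H2, H3. ring. }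
apply sq_sum_zero in E. destruct E as [E1 E2]. split.
- replace (a / S * dx) with ((a*dx)/S) by (field; auto). replace (a*dx) with (S*ux) by lra. field. auto.
- replace (a / S * dy) with ((a*dy)/S) by (field; auto). replace (a*dy) with (S*uy) by lra. field. auto.
Qed.

Lemma Cmod_sub_sym (x y : C) : Cmod (x - y) = Cmod (y - x).
Proof. replace (x - y)%C with (- (y - x))%C by ring. apply Cmod_opp. Qed.

Lemma tn_II_conv c1 c2 r1 r2 : 0 < r1 -> 0 < r2 ->
  (fst c2 - fst c1)^2 + (snd c2 - snd c1)^2 = (r1 + r2)^2 ->
  tangent_no (Inner c1 r1) (Inner c2 r2).
Proof.
intros H1 H2 HQ. split.
- unfold tangent. cbn [on_boundary].
  set (dx := fst c2 - fst c1). set (dy := snd c2 - snd c1).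
  exists (fst c1 + r1/(r1+r2) * dx, snd c1 + r1/(r1+r2) * dy). split.
  + split; apply Cmod_eq_iff; try lra; rewrite nsq_sub; cbn [fst snd].
    * replace ((fst c1 + r1 / (r1 + r2) * dx - fst c1) ^ 2 + (snd c1 + r1 / (r1 + r2) * dy - snd c1) ^ 2)
        with ((r1/(r1+r2))^2 * (dx^2+dy^2)) by ring.
      fold dx dy in HQ. rewrite HQ. field. lra.
    * replace ((fst c1 + r1 / (r1 + r2) * dx - fst c2) ^ 2 + (snd c1 + r1 / (r1 + r2) * dy - snd c2) ^ 2)
        with ((r1/(r1+r2) - 1)^2 * (dx^2+dy^2)) by (unfold dx, dy; ring).
      fold dx dy in HQ. rewrite HQ. field. lra.
  + intros z [Z1 Z2]. apply Cmod_eq_iff in Z1; [|lra]. apply Cmod_eq_iff in Z2; [|lra].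
    rewrite nsq_sub in Z1, Z2. fold dx dy in HQ.
    destruct z as [zx zy]. cbn [fst snd] in *.
    assert (Z2' : (zx - fst c1 - dx)^2 + (zy - snd c1 - dy)^2 = r2^2) by (rewrite <- Z2; unfold dx, dy; ring).
    assert (Hd : (zx - fst c1)*dx + (zy - snd c1)*dy = r1*(r1+r2)) by nra.
    destruct (uniq_pt _ _ _ _ _ _ Z1 HQ Hd ltac:(lra)) as [U1 U2].
    f_equal; lra.
- intros z [Z1 Z2]. cbn [in_disk] in Z1, Z2.
  assert (E : Cmod (c2 - c1) = r1 + r2) by (apply Cmod_eq_iff; [lra|]; rewrite nsq_sub; auto).
  pose proof (Cmod_triangle (z - c1) (c2 - z)) as T.
  replace (z - c1 + (c2 - z))%C with (c2 - c1)%C in T by ring.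
  rewrite (Cmod_sub_sym c2 z) in T. lra.
Qed.

Lemma tn_OI_conv c1 c2 r1 r2 : 0 < r1 -> r1 < r2 ->
  (fst c1 - fst c2)^2 + (snd c1 - snd c2)^2 = (r2 - r1)^2 ->
  tangent_no (Outer c2 r2) (Inner c1 r1).
Proof.
intros H1 H2 HQ. split.
- unfold tangent. cbn [on_boundary].
  set (dx := fst c1 - fst c2). set (dy := snd c1 - snd c2).
  exists (fst c2 + r2/(r2-r1) * dx, snd c2 + r2/(r2-r1) * dy). split.
  + split; apply Cmod_eq_iff; try lra; rewrite nsq_sub; cbn [fst snd].
    * replace ((fst c2 + r2 / (r2 - r1) * dx - fst c2) ^ 2 + (snd c2 + r2 / (r2 - r1) * dy - snd c2) ^ 2)
        with ((r2/(r2-r1))^2 * (dx^2+dy^2)) by ring.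
      fold dx dy in HQ. rewrite HQ. field. lra.
    * replace ((fst c2 + r2 / (r2 - r1) * dx - fst c1) ^ 2 + (snd c2 + r2 / (r2 - r1) * dy - snd c1) ^ 2)
        with ((r2/(r2-r1) - 1)^2 * (dx^2+dy^2)) by (unfold dx, dy; ring).
      fold dx dy in HQ. rewrite HQ. field. lra.
  + intros z [Z1 Z2]. apply Cmod_eq_iff in Z1; [|lra]. apply Cmod_eq_iff in Z2; [|lra].
    rewrite nsq_sub in Z1, Z2. fold dx dy in HQ.
    destruct z as [zx zy]. cbn [fst snd] in *.
    assert (Z2' : (zx - fst c2 - dx)^2 + (zy - snd c2 - dy)^2 = r1^2) by (rewrite <- Z2; unfold dx, dy; ring).
    assert (Hd : (zx - fst c2)*dx + (zy - snd c2)*dy = r2*(r2-r1)) by nra.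
    destruct (uniq_pt _ _ _ _ _ _ Z1 HQ Hd ltac:(lra)) as [U1 U2].
    f_equal; lra.
- intros z [Z1 Z2]. cbn [in_disk] in Z1, Z2.
  assert (E : Cmod (c1 - c2) = r2 - r1) by (apply Cmod_eq_iff; [lra|]; rewrite nsq_sub; auto).
  pose proof (Cmod_triangle (z - c1) (c1 - c2)) as T.
  replace (z - c1 + (c1 - c2))%C with (z - c2)%C in T by ring.
  lra.
Qed.

Definition bvr (Bz : Z) (v : Z * Z) : R :=
  IZR Bz + (IZR (fst v) * IZR (fst v) + IZR (snd v) * IZR (snd v)).
Definition cen (Bz : Z) (v : Z * Z) : C :=
  (- (IZR (fst v) * IZR (fst v) - IZR (snd v) * IZR (snd v)) / (IZR Bz * bvr Bz v),
   - (2 * IZR (fst v) * IZR (snd v)) / (IZR Bz * bvr Bz v)).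
Definition diskv (Bz : Z) (v : Z * Z) : disk := Inner (cen Bz v) (/ bvr Bz v).
Definition Dzero (Bz : Z) : disk := Outer (RtoC 0) (/ IZR Bz).

Lemma bvr_pos Bz v : (0 < Bz)%Z -> 0 < bvr Bz v.
Proof. intros H. apply IZR_lt in H. unfold bvr. nra. Qed.

Lemma bvr_IZR Bz v : bvr Bz v = IZR (Bz + znorm2 v).
Proof. unfold bvr, znorm2, zdot. rewrite plus_IZR, plus_IZR, !mult_IZR. reflexivity. Qed.

Lemma curv_diskv Bz v : (0 < Bz)%Z -> curvature (diskv Bz v) = IZR (Bz + znorm2 v).
Proof. intros H. cbn. rewrite Rinv_inv. apply bvr_IZR. Qed.

Lemma curv_Dzero Bz : (0 < Bz)%Z -> curvature (Dzero Bz) = IZR (- Bz).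
Proof. intros H. cbn. rewrite Rinv_inv. rewrite opp_IZR. reflexivity. Qed.

Lemma wf_diskv Bz v : (0 < Bz)%Z -> wf_disk (diskv Bz v).
Proof. intros H. cbn. apply Rinv_0_lt_compat, bvr_pos; auto. Qed.

Lemma wf_Dzero Bz : (0 < Bz)%Z -> wf_disk (Dzero Bz).
Proof. intros H. cbn. apply Rinv_0_lt_compat, IZR_lt; auto. Qed.

Lemma nz_of_cross v w : zcross v w <> 0%Z ->
  0 < IZR (fst v) * IZR (fst v) + IZR (snd v) * IZR (snd v).
Proof.
intros H. rewrite <- !mult_IZR, <- plus_IZR. apply IZR_lt.
unfold zcross in H. destruct v as [x y]. cbn [fst snd] in *.
destruct (Z.eq_dec x 0), (Z.eq_dec y 0); subst; try nia.
Qed.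

Lemma T1 Bz v : (0 < Bz)%Z -> 0 < IZR (fst v) * IZR (fst v) + IZR (snd v) * IZR (snd v) ->
  tangent_no (Dzero Bz) (diskv Bz v).
Proof.
intros HB HV. unfold Dzero, diskv.
pose proof (IZR_lt _ _ HB) as HB'.
pose proof (bvr_pos Bz v HB) as Hb.
apply tn_OI_conv.
- apply Rinv_0_lt_compat; auto.
- apply Rinv_lt_contravar; [nra|]. unfold bvr. lra.
- unfold cen, bvr in *. cbn [fst snd RtoC].
  set (x := IZR (fst v)) in *. set (y := IZR (snd v)) in *. set (b := IZR Bz) in *.
  field. lra.
Qed.

Lemma T2_alg x y u w b : 0 < b -> (x*w - u*y)^2 = b^2 ->
  let bv := b + (x*x + y*y) in let bw := b + (u*u + w*w) in
  (- (u*u - w*w)/(b*bw) - - (x*x - y*y)/(b*bv))^2 + (- (2*u*w)/(b*bw) - - (2*x*y)/(b*bv))^2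
  = (/bv + /bw)^2.
Proof.
intros Hb HX bv bw.
assert (Hv : 0 < bv) by (unfold bv; nra). assert (Hw : 0 < bw) by (unfold bw; nra).
assert (E : (- (u*u - w*w)/(b*bw) - - (x*x - y*y)/(b*bv))^2 + (- (2*u*w)/(b*bw) - - (2*x*y)/(b*bv))^2
  - (/bv + /bw)^2 = 4 * ((x*w - u*y)^2 - b^2) / (b^2 * bv * bw)).
{ unfold bv, bw in *. field. repeat split; lra. }
rewrite HX in E. lra.
Qed.

Lemma T2 Bz v w : (0 < Bz)%Z -> (zcross v w = Bz \/ zcross v w = (- Bz)%Z) ->
  tangent_no (diskv Bz v) (diskv Bz w).
Proof.
intros HB HC. unfold diskv.
pose proof (IZR_lt _ _ HB) as HB'.
apply tn_II_conv.
- apply Rinv_0_lt_compat, bvr_pos; auto.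
- apply Rinv_0_lt_compat, bvr_pos; auto.
- unfold cen, bvr. cbn [fst snd].
  apply T2_alg; auto.
  assert (E : (zcross v w * zcross v w = Bz * Bz)%Z) by (destruct HC as [-> | ->]; ring).
  apply (f_equal IZR) in E. rewrite !mult_IZR in E. unfold zcross in E.
  rewrite minus_IZR, !mult_IZR in E. lra.
Qed.

Lemma spin_ok Bz v : (0 < Bz)%Z -> is_spin (Dzero Bz) (diskv Bz v) (zvec v).
Proof.
intros HB. pose proof (IZR_lt _ _ HB) as HB'. pose proof (bvr_pos Bz v HB) as Hb.
exists (RtoC 0), (- / IZR Bz), (cen Bz v), (/ bvr Bz v).
split; [reflexivity|]. split; [reflexivity|].
unfold zvec, cen. unfold bvr in *.
set (x := IZR (fst v)) in *. set (y := IZR (snd v)) in *. set (b := IZR Bz) in *.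
unfold Cdiv, Cminus, Cmult, Cinv, Cplus, Copp, RtoC. cbn [fst snd].
f_equal; field; lra.
Qed.

Lemma diskv_opp Bz x y : diskv Bz ((- x)%Z, (- y)%Z) = diskv Bz (x, y).
Proof.
unfold diskv, cen, bvr. cbn [fst snd]. rewrite !opp_IZR.
rewrite !Rmult_opp_opp.
replace (2 * - IZR x * - IZR y) with (2 * IZR x * IZR y) by ring. reflexivity.
Qed.

Definition Xd Bz (a b : Z * Z) (al be : Z) := diskv Bz (zlin al be a b).

Lemma Xd_opp Bz a b al be : Xd Bz a b (- al) (- be) = Xd Bz a b al be.
Proof.
unfold Xd. replace (zlin (- al) (- be) a b) with ((- fst (zlin al be a b))%Z, (- snd (zlin al be a b))%Z).
- rewrite diskv_opp. destruct (zlin al be a b); reflexivity.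
- unfold zlin. cbn [fst snd]. f_equal; ring.
Qed.

Lemma cross_lin a b al be ga de :
  zcross (zlin al be a b) (zlin ga de a b) = ((al*de - be*ga) * zcross a b)%Z.
Proof. destruct a, b. unfold zcross, zlin. cbn [fst snd]. ring. Qed.

Definition det1 (al be ga de : Z) := (al*de - be*ga = 1 \/ al*de - be*ga = -1)%Z.

Lemma crossB a b Bz al be ga de : Bz = Z.abs (zcross a b) -> det1 al be ga de ->
  zcross (zlin al be a b) (zlin ga de a b) = Bz \/ zcross (zlin al be a b) (zlin ga de a b) = (- Bz)%Z.
Proof.
intros HB Hd. rewrite cross_lin. subst Bz. unfold det1 in Hd.
destruct (Z.le_gt_cases 0 (zcross a b)).
- rewrite Z.abs_eq by auto. destruct Hd as [-> | ->]; [left|right]; ring.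
- rewrite Z.abs_neq by lia. destruct Hd as [-> | ->]; [right|left]; ring.
Qed.

Lemma zcross_anti v w : zcross w v = (- zcross v w)%Z.
Proof. unfold zcross. ring. Qed.

Lemma pair_tn a b Bz al be ga de : (0 < Bz)%Z -> Bz = Z.abs (zcross a b) -> det1 al be ga de ->
  tangent_no (Xd Bz a b al be) (Xd Bz a b ga de) /\
  tangent_no (Dzero Bz) (Xd Bz a b al be) /\ tangent_no (Dzero Bz) (Xd Bz a b ga de).
Proof.
intros HB HBz Hd. pose proof (crossB a b Bz al be ga de HBz Hd) as HC.
split; [|split].
- apply T2; auto.
- apply T1; auto. apply (nz_of_cross _ (zlin ga de a b)). lia.
- apply T1; auto. apply (nz_of_cross _ (zlin al be a b)). rewrite zcross_anti. lia.
Qed.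

Lemma desc_lin a b Bz u1 u2 w1 w2 e1 e2 : (0 < Bz)%Z -> Bz = Z.abs (zcross a b) ->
  det1 u1 u2 w1 w2 -> det1 u1 u2 e1 e2 -> det1 w1 w2 e1 e2 ->
  descartes (Dzero Bz) (Xd Bz a b u1 u2) (Xd Bz a b w1 w2) (Xd Bz a b e1 e2).
Proof.
intros HB HBz H1 H2 H3.
destruct (pair_tn a b Bz _ _ _ _ HB HBz H1) as [T12 [T01 T02]].
destruct (pair_tn a b Bz _ _ _ _ HB HBz H2) as [T13 [_ T03]].
destruct (pair_tn a b Bz _ _ _ _ HB HBz H3) as [T23 _].
unfold Xd in *.
repeat split; auto using wf_Dzero, wf_diskv; apply T13 || apply T23 || apply T12 || apply T01 || apply T02 || apply T03.
Qed.

Definition Reach Bz a b al be ga de :=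
  gen_tricycle (Dzero Bz) (Xd Bz a b 1 0) (Xd Bz a b 0 1) (Dzero Bz) (Xd Bz a b al be) (Xd Bz a b ga de).


Lemma S1 a b Bz (HB : (0 < Bz)%Z) (HBz : Bz = Z.abs (zcross a b)) al be ga de ga' de' : Reach Bz a b al be ga de -> det1 al be ga de ->
  ga' = (al + ga)%Z -> de' = (be + de)%Z -> Reach Bz a b al be ga' de'.
Proof.
intros R Hd -> ->. unfold Reach in *. eapply gt_step1; [exact R|].
apply desc_lin; auto; unfold det1 in *; lia.
Qed.

Lemma S2 a b Bz (HB : (0 < Bz)%Z) (HBz : Bz = Z.abs (zcross a b)) al be ga de al' be' : Reach Bz a b al be ga de -> det1 al be ga de ->
  al' = (al + ga)%Z -> be' = (be + de)%Z -> Reach Bz a b al' be' ga de.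
Proof.
intros R Hd -> ->. unfold Reach in *. eapply gt_step2; [exact R|].
apply desc_lin; auto; unfold det1 in *; lia.
Qed.

Lemma S3 a b Bz (HB : (0 < Bz)%Z) (HBz : Bz = Z.abs (zcross a b)) al be ga de ga' de' : Reach Bz a b al be ga de -> det1 al be ga de ->
  ga' = (al - ga)%Z -> de' = (be - de)%Z -> Reach Bz a b al be ga' de'.
Proof.
intros R Hd -> ->. unfold Reach in *. eapply gt_step1; [exact R|].
apply desc_lin; auto; unfold det1 in *; lia.
Qed.

Lemma S4 a b Bz (HB : (0 < Bz)%Z) (HBz : Bz = Z.abs (zcross a b)) al be ga de al' be' : Reach Bz a b al be ga de -> det1 al be ga de ->
  al' = (al - ga)%Z -> be' = (be - de)%Z -> Reach Bz a b al' be' ga de.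
Proof.
intros R Hd -> ->. unfold Reach in *. eapply gt_step2; [exact R|].
apply desc_lin; auto; unfold det1 in *; lia.
Qed.

Lemma Sopp1 a b Bz al be ga de : Reach Bz a b al be ga de -> Reach Bz a b (- al) (- be) ga de.
Proof. unfold Reach. rewrite Xd_opp. auto. Qed.
Lemma Sopp2 a b Bz al be ga de : Reach Bz a b al be ga de -> Reach Bz a b al be (- ga) (- de).
Proof. unfold Reach. rewrite (Xd_opp Bz a b ga de). auto. Qed.

Lemma R_init a b Bz : Reach Bz a b 1 0 0 1.
Proof. apply gt_init. Qed.

Lemma R_swap a b Bz (HB : (0 < Bz)%Z) (HBz : Bz = Z.abs (zcross a b)) : Reach Bz a b 0 1 1 0.
Proof.
pose proof (R_init a b Bz) as R0.
assert (R1 : Reach Bz a b 1 0 1 1) by (eapply (S1 a b Bz HB HBz); [exact R0| unfold det1; lia | reflexivity | reflexivity]).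
assert (R2 : Reach Bz a b 0 (-1) 1 1) by (eapply (S4 a b Bz HB HBz); [exact R1| unfold det1; lia | reflexivity | reflexivity]).
assert (R3 : Reach Bz a b 0 (-1) 1 0) by (eapply (S1 a b Bz HB HBz); [exact R2| unfold det1; lia | reflexivity | reflexivity]).
apply Sopp1 in R3. exact R3.
Qed.

Local Open Scope Z_scope.
Lemma red_pos (A B C D : Z) : 0 <= A -> 0 <= B -> 0 <= C -> 0 <= D -> A*D - B*C = 1 \/ A*D-B*C = -1 -> A+B+C+D > 2 ->
  (C <= A /\ D <= B /\ 0 < C + D) \/ (A <= C /\ B <= D /\ 0 < A + B).
Proof.
intros. destruct (Z.le_gt_cases C A), (Z.le_gt_cases D B); try nia.
Qed.
Lemma abs_sub_same a c : 0 <= a*c -> Z.abs (a - c) = Z.abs (Z.abs a - Z.abs c).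
Proof. intros. destruct (Z.le_gt_cases 0 a), (Z.le_gt_cases 0 c); try nia. Qed.
Lemma abs_add_opp a c : a*c <= 0 -> Z.abs (a + c) = Z.abs (Z.abs a - Z.abs c).
Proof. intros. destruct (Z.le_gt_cases 0 a), (Z.le_gt_cases 0 c); try nia. Qed.
Lemma det_abs_same a b c d : 0 <= a*c -> 0 <= b*d -> (a*d - b*c = 1 \/ a*d-b*c = -1) ->
  Z.abs a * Z.abs d - Z.abs b * Z.abs c = 1 \/ Z.abs a * Z.abs d - Z.abs b * Z.abs c = -1.
Proof.
intros. rewrite <- !Z.abs_mul.
assert (0 <= (a*d)*(b*c)) by (replace ((a*d)*(b*c)) with ((a*c)*(b*d)) by ring; nia).
destruct (Z.le_gt_cases 0 (a*d)), (Z.le_gt_cases 0 (b*c)); nia.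
Qed.
Lemma XY_lem X Y : X*Y < 0 -> X - Y = 1 \/ X - Y = -1 -> False.
Proof. intros. destruct (Z.le_gt_cases 0 X); nia. Qed.
Lemma sign_cases a b c d : (a*d - b*c = 1 \/ a*d-b*c = -1) -> (0 <= a*c /\ 0 <= b*d) \/ (a*c <= 0 /\ b*d <= 0).
Proof.
intros H. destruct (Z.le_gt_cases 0 (a*c)), (Z.le_gt_cases 0 (b*d)); try lia.
- destruct (Z.eq_dec (a*c) 0); [lia|]. destruct (Z.eq_dec (b*d) 0); [lia|].
  assert ((a*d)*(b*c) < 0) by (replace ((a*d)*(b*c)) with ((a*c)*(b*d)) by ring; nia).
  exfalso. apply (XY_lem (a*d) (b*c)); lia.
- destruct (Z.eq_dec (a*c) 0); [lia|]. destruct (Z.eq_dec (b*d) 0); [lia|].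
  assert ((a*d)*(b*c) < 0) by (replace ((a*d)*(b*c)) with ((a*c)*(b*d)) by ring; nia).
  exfalso. apply (XY_lem (a*d) (b*c)); lia.
Qed.
Lemma red (a b c d : Z) : a*d - b*c = 1 \/ a*d-b*c = -1 -> Z.abs a + Z.abs b + Z.abs c + Z.abs d > 2 ->
  Z.abs (a-c) + Z.abs (b-d) < Z.abs a + Z.abs b \/ Z.abs (a+c) + Z.abs (b+d) < Z.abs a + Z.abs b \/
  Z.abs (c-a) + Z.abs (d-b) < Z.abs c + Z.abs d \/ Z.abs (c+a) + Z.abs (d+b) < Z.abs c + Z.abs d.
Proof.
intros H1 H2.
destruct (sign_cases a b c d H1) as [[Hac Hbd]|[Hac Hbd]].
- pose proof (det_abs_same a b c d Hac Hbd H1).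
  rewrite (abs_sub_same a c Hac), (abs_sub_same b d Hbd), (abs_sub_same c a) by lia.
  rewrite (abs_sub_same d b) by lia.
  pose proof (red_pos (Z.abs a) (Z.abs b) (Z.abs c) (Z.abs d)) as HR.
  destruct HR; try lia.
- assert (H3: (-a)*(-d) - (-b)*(-c) = 1 \/ (-a)*(-d) - (-b)*(-c) = -1) by lia.
  assert (0 <= (-a)*c) by lia. assert (0 <= (-b)*d) by lia.
  pose proof (det_abs_same (-a) (-b) c d ltac:(lia) ltac:(lia) ltac:(lia)).
  rewrite !Z.abs_opp in *.
  rewrite (abs_add_opp a c Hac), (abs_add_opp b d Hbd), (abs_add_opp c a) by lia.
  rewrite (abs_add_opp d b) by lia.
  pose proof (red_pos (Z.abs a) (Z.abs b) (Z.abs c) (Z.abs d)) as HR.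
  destruct HR; try lia.
Qed.
Lemma small_cases al be ga de : (al*de - be*ga = 1 \/ al*de - be*ga = -1) -> Z.abs al + Z.abs be + Z.abs ga + Z.abs de <= 2 ->
  ((al = 1 \/ al = -1) /\ be = 0 /\ ga = 0 /\ (de = 1 \/ de = -1)) \/
  (al = 0 /\ (be = 1 \/ be = -1) /\ (ga = 1 \/ ga = -1) /\ de = 0).
Proof.
intros H1 H2.
assert (al = -2 \/ al = -1 \/ al = 0 \/ al = 1 \/ al = 2) as Ha by lia.
assert (be = -2 \/ be = -1 \/ be = 0 \/ be = 1 \/ be = 2) as Hb by lia.
destruct Ha as [ -> | [ -> | [ -> | [ -> | -> ] ] ] ]; destruct Hb as [ -> | [ -> | [ -> | [ -> | -> ] ] ] ]; lia.
Qed.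

Lemma Reach_all a b Bz (HB : (0 < Bz)%Z) (HBz : Bz = Z.abs (zcross a b)) (n : nat) :
  forall al be ga de, Z.abs al + Z.abs be + Z.abs ga + Z.abs de <= Z.of_nat n ->
  det1 al be ga de -> Reach Bz a b al be ga de.
Proof.
induction n as [|n IH]; intros al be ga de Hs Hd.
- exfalso. assert (al = 0 /\ be = 0 /\ ga = 0 /\ de = 0) as [-> [-> [-> ->]]] by lia.
  unfold det1 in Hd. lia.
- destruct (Z_le_gt_dec (Z.abs al + Z.abs be + Z.abs ga + Z.abs de) 2) as [Hle|Hgt].
  + destruct (small_cases al be ga de Hd Hle) as [[Ha [-> [-> Hde]]]|[-> [Hb [Hg ->]]]].
    * destruct Ha as [-> | ->]; destruct Hde as [-> | ->].
      -- apply R_init.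
      -- apply (Sopp2 a b Bz 1 0 0 1). apply R_init.
      -- apply (Sopp1 a b Bz 1 0 0 1). apply R_init.
      -- apply (Sopp1 a b Bz 1 0 0 (-1)). apply (Sopp2 a b Bz 1 0 0 1). apply R_init.
    * destruct Hb as [-> | ->]; destruct Hg as [-> | ->].
      -- apply R_swap; auto.
      -- apply (Sopp2 a b Bz 0 1 1 0). apply R_swap; auto.
      -- apply (Sopp1 a b Bz 0 1 1 0). apply R_swap; auto.
      -- apply (Sopp1 a b Bz 0 1 (-1) 0). apply (Sopp2 a b Bz 0 1 1 0). apply R_swap; auto.
  + rewrite Nat2Z.inj_succ in Hs.
    destruct (red al be ga de Hd ltac:(lia)) as [H|[H|[H|H]]].
    * apply (S2 a b Bz HB HBz (al - ga) (be - de) ga de); [apply IH| | |]; unfold det1 in *; try lia.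
    * apply (S4 a b Bz HB HBz (al + ga) (be + de) ga de); [apply IH| | |]; unfold det1 in *; try lia.
    * apply (S1 a b Bz HB HBz al be (ga - al) (de - be)); [apply IH| | |]; unfold det1 in *; try lia.
    * assert (K : Reach Bz a b al be (- ga) (- de)).
      { apply (S3 a b Bz HB HBz al be (ga + al) (de + be)); [apply IH| | |]; unfold det1 in *; try lia. }
      apply (Sopp2 a b Bz) in K. rewrite !Z.opp_involutive in K. exact K.
Qed.
Local Close Scope Z_scope.

Lemma zlin10 a b : zlin 1 0 a b = a.
Proof. destruct a, b. unfold zlin. cbn [fst snd]. f_equal; ring. Qed.
Lemma zlin01 a b : zlin 0 1 a b = b.
Proof. destruct a, b. unfold zlin. cbn [fst snd]. f_equal; ring. Qed.
Lemma zlin11 a b : zlin 1 1 a b = zadd a b.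
Proof. destruct a, b. unfold zlin, zadd. cbn [fst snd]. f_equal; ring. Qed.
Lemma zlin1m a b : zlin 1 (-1) a b = zsub a b.
Proof. destruct a, b. unfold zlin, zsub. cbn [fst snd]. f_equal; ring. Qed.

Lemma curv_Xd Bz a b al be : (0 < Bz)%Z -> curvature (Xd Bz a b al be) = IZR (Bz + znorm2 (zlin al be a b)).
Proof. intros. unfold Xd. apply curv_diskv; auto. Qed.

Theorem proposition3p2 (a b : Z * Z) :
  zcross a b <> 0%Z ->
  let B := Z.abs (zcross a b) in
  let B0 := (- B)%Z in
  let B1 := (B + znorm2 a)%Z in
  let B2 := (B + znorm2 b)%Z in
  let B3 := (B + znorm2 (zadd a b))%Z in
  let B4 := (B + znorm2 (zsub a b))%Z in
  exists D0 D1 D2 D3 D4 : disk,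
    (* everted Descartes configuration with curvatures (B0,B1,B2,B3) *)
    everted D0 D1 D2 D3 /\
    curvature D0 = IZR B0 /\ curvature D1 = IZR B1 /\
    curvature D2 = IZR B2 /\ curvature D3 = IZR B3 /\
    (* the conjugate configuration, with B4 in place of B3 *)
    everted D0 D1 D2 D4 /\ curvature D4 = IZR B4 /\
    (* spinors *)
    is_spin D0 D1 (zvec a) /\ is_spin D0 D2 (zvec b) /\
    (* the generated Apollonian packing is integral *)
    integral_packing D0 D1 D2 /\
    (* disks of the major corona indexed by coprime (alpha, beta) *)
    exists Dv : Z -> Z -> disk,
      (forall alpha beta : Z, Z.gcd alpha beta = 1%Z ->
         in_major_corona D0 D1 D2 (Dv alpha beta) /\
         curvature (Dv alpha beta)
           = IZR (B + znorm2 (zlin alpha beta a b))%Z) /\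
      (forall alpha beta gamma delta : Z,
         Z.gcd alpha beta = 1%Z -> Z.gcd gamma delta = 1%Z ->
         (zcross (zlin alpha beta a b) (zlin gamma delta a b) = B \/
          zcross (zlin alpha beta a b) (zlin gamma delta a b) = (- B)%Z) ->
         tricycle D0 (Dv alpha beta) (Dv gamma delta)).
Proof.
intros Hc. cbv zeta.
set (Bz := Z.abs (zcross a b)).
assert (HBz : Bz = Z.abs (zcross a b)) by reflexivity.
assert (HB : (0 < Bz)%Z) by (unfold Bz; lia).
exists (Dzero Bz), (Xd Bz a b 1 0), (Xd Bz a b 0 1), (Xd Bz a b 1 1), (Xd Bz a b 1 (-1)).
assert (HD0 : curvature (Dzero Bz) <= 0) by (rewrite curv_Dzero by auto; apply IZR_le; lia).
split; [split; [apply desc_lin; auto; unfold det1; lia | left; auto]|].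
split; [apply curv_Dzero; auto|].
split; [rewrite curv_Xd, zlin10 by auto; reflexivity|].
split; [rewrite curv_Xd, zlin01 by auto; reflexivity|].
split; [rewrite curv_Xd, zlin11 by auto; reflexivity|].
split; [split; [apply desc_lin; auto; unfold det1; lia | left; auto]|].
split; [rewrite curv_Xd, zlin1m by auto; reflexivity|].
split; [unfold Xd; rewrite zlin10; apply spin_ok; auto|].
split; [unfold Xd; rewrite zlin01; apply spin_ok; auto|].
split.
{ apply inv_integral. exists (- Bz)%Z, (Bz + znorm2 a)%Z, (Bz + znorm2 b)%Z, (zdot a b).
  split; [apply curv_Dzero; auto|].
  split; [rewrite curv_Xd, zlin10 by auto; reflexivity|].
  split; [rewrite curv_Xd, zlin01 by auto; reflexivity|].
  assert (E : (Bz * Bz = zcross a b * zcross a b)%Z) by (unfold Bz; apply Z.abs_square).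
  unfold znorm2, zdot, zcross in *. destruct a as [a1 a2], b as [b1 b2]. cbn [fst snd] in *.
  nia. }
exists (fun al be => Xd Bz a b al be). split.
- intros al be Hg.
  destruct (Z.gcd_bezout al be 1 Hg) as [u [v Huv]].
  assert (Hd : det1 al be (- v) u) by (unfold det1; lia).
  assert (R : Reach Bz a b al be (- v) u).
  { apply (Reach_all a b Bz HB HBz (Z.to_nat (Z.abs al + Z.abs be + Z.abs (- v) + Z.abs u))); auto.
    rewrite Z2Nat.id by lia. lia. }
  split; [split|].
  + exists (Dzero Bz), (Xd Bz a b al be), (Xd Bz a b (- v) u). split; [exact R| right; left; reflexivity].
  + destruct (pair_tn a b Bz al be (- v) u HB HBz Hd) as [_ [[T _] _]]. exact T.
  + apply curv_Xd; auto.
- intros al be ga de _ _ Hc'.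
  unfold tricycle, Xd.
  split; [apply wf_Dzero; auto|]. split; [apply wf_diskv; auto|]. split; [apply wf_diskv; auto|].
  split; [apply T1; auto; apply (nz_of_cross _ (zlin ga de a b)); lia|].
  split; [apply T1; auto; apply (nz_of_cross _ (zlin al be a b)); rewrite zcross_anti; lia|].
  apply T2; auto.
Qed.
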